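(* Let $G$ be a finite simple connected graph with exactly $h$ holes. Suppose that all the holes in $G$ are pairwise edge-disjoint, that $G$ has at most one non-edge maximal clique, and that the clique number satisfies $\omega(G)=h+1$. Let $K$ be a clique of $G$ with $|V(K)|=\omega(G)$. Then there exists an acyclic digraph $D$ such that $C(D)=G\cup\{i_1,i_2\}$, where $i_1,i_2$ are two new isolated vertices, and all vertices of $K$ have $i_2$ as a common out-neighbor in $D$. In particular, $k(G)\le 2$.
   Context: A hole of a graph is an induced (chordless) cycle of length at least $4$. A clique is a complete subgraph; a clique is non-edge if it has at least $3$ vertices. $\omega(G)$ is the maximum number of vertices of a clique in $G$. For a digraph $D=(V,A)$, its competition graph $C(D)$ has vertex set $V$, with distinct $x,y$ adjacent iff there is $v\in V$ with $(x,v),(y,v)\in A$. The competition number $k(G)$ is the smallest $k\ge 0$ such that $G$ together with $k$ new isolated vertices is the competition graph of an acyclic digraph. $G\cup\{i_1,i_2\}$ denotes the disjoint union of $G$ with two isolated vertices. *)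

(* Defs.v *)
From mathcomp Require Import all_boot.
Set Implicit Arguments. Unset Strict Implicit. Unset Printing Implicit Defensive.

Section Graphs.
Variable T : finType.

Definition simple_graph (e : rel T) : Prop := symmetric e /\ irreflexive e.

Definition connected_graph (e : rel T) : Prop := forall x y, connect e x y.

(* S is the vertex set of a hole: an induced (chordless) cycle of length >= 4.
   s lists the vertices of the cycle in cyclic order; two vertices of S are
   adjacent in G iff they are consecutive on the cycle. *)
Definition is_hole (e : rel T) (S : {set T}) : Prop :=
  exists s : seq T,
    [/\ uniq s, 4 <= size s, (forall x, (x \in S) = (x \in s)) &
       forall x y, x \in s -> y \in s ->
         e x y = (index y s == (index x s).+1 %% size s)
              || (index x s == (index y s).+1 %% size s)].

Definition num_holes (e : rel T) (h : nat) : Prop :=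
  exists H : {set {set T}}, (forall S, S \in H <-> is_hole e S) /\ #|H| = h.

(* distinct holes share no edge (edges of an induced cycle are the G-edges inside it) *)
Definition holes_edge_disjoint (e : rel T) : Prop :=
  forall S1 S2, is_hole e S1 -> is_hole e S2 -> S1 <> S2 ->
    forall x y, x \in S1 -> y \in S1 -> x \in S2 -> y \in S2 -> ~~ e x y.

Definition is_clique (e : rel T) (S : {set T}) : bool :=
  [forall x in S, forall y in S, (x != y) ==> e x y].

Definition maximal_clique (e : rel T) (S : {set T}) : Prop :=
  is_clique e S /\ forall S' : {set T}, is_clique e S' -> S \subset S' -> S' = S.

(* non-edge clique: at least 3 vertices *)
Definition at_most_one_nonedge_maxclique (e : rel T) : Prop :=
  forall Q1 Q2, maximal_clique e Q1 -> 3 <= #|Q1| ->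
                maximal_clique e Q2 -> 3 <= #|Q2| -> Q1 = Q2.

Definition omega (e : rel T) : nat := \max_(S : {set T} | is_clique e S) #|S|.

Definition add_isolated (k : nat) (e : rel T) : rel (T + 'I_k) :=
  fun u v => match u, v with inl x, inl y => e x y | _, _ => false end.

End Graphs.

Definition acyclic (V : finType) (a : rel V) : Prop :=
  forall x y, a x y -> ~~ connect a y x.

Definition competition_graph (V : finType) (a : rel V) : rel V :=
  fun x y => (x != y) && [exists v, a x v && a y v].

Definition comp_with_isolated (T : finType) (e : rel T) (k : nat) : Prop :=
  exists a : rel (T + 'I_k), acyclic a /\ competition_graph a =2 @add_isolated T k e.

Definition competition_number_le (T : finType) (e : rel T) (m : nat) : Prop :=
  exists k, k <= m /\ comp_with_isolated e k.

(* Main.v *)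
From Stdlib Require Import Lia.
From mathcomp Require Import all_boot.
Require Import Defs.
Lemma neq_lia (a b : nat) : a != b -> a <> b. Proof. by move/eqP. Qed.
Lemma lia_neq (a b : nat) : a <> b -> a != b. Proof. by move/eqP. Qed.
Ltac tolia := repeat match goal with
  | H : is_true (_ <= _) |- _ => apply (elimT leP) in H
  | H : is_true (_ < _) |- _ => apply (elimT ltP) in H
  | H : is_true (@eq_op _ ?a _) |- _ => lazymatch type of a with nat => apply (elimT eqP) in H end
  | H : is_true (~~ (@eq_op _ ?a _)) |- _ => lazymatch type of a with nat => apply neq_lia in H end
  | H : (_ <= _) = false |- _ => apply negbT in H
  | H : (_ < _) = false |- _ => apply negbT in H
  | H : is_true (~~ (_ <= _)) |- _ => rewrite -ltnNge in H
  | H : is_true (~~ (_ < _)) |- _ => rewrite -leqNgt in H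
  | |- is_true (_ <= _) => apply/leP
  | |- is_true (_ < _) => apply/ltP
  | |- is_true (@eq_op _ ?a _) => lazymatch type of a with nat => apply/eqP end
  | |- is_true (~~ (@eq_op _ ?a _)) => lazymatch type of a with nat => apply lia_neq end
  end; rewrite -?plusE -?minusE -?multE; repeat match goal with H : context [addn] |- _ => rewrite -plusE in H | H : context [subn] |- _ => rewrite -minusE in H | H : context [muln] |- _ => rewrite -multE in H end.
Ltac slia := tolia; lia.
Set Implicit Arguments. Unset Strict Implicit. Unset Printing Implicit Defensive.

Section B.
Variable T : finType.
Variable f : rel T.
Hypothesis fsym : symmetric f.
Hypothesis firr : irreflexive f.

Definition inS (S : {set T}) (y : T + 'I_2) : bool :=
  if y is inl u then u \in S else false.
Definition degS (S : {set T}) x := #|[set y in S | f x y]|.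
Definition PS (S : {set T}) := (\sum_(x in S) degS S x)%N.
Definition edgeU (S : {set T}) (x y : T + 'I_2) : bool :=
  match x, y with inl u, inl u' => [&& u \in S, u' \in S & f u u'] | _, _ => false end.

Definition Good (S : {set T}) (X : {set T + 'I_2}) : Prop :=
  exists (b : rel (T + 'I_2)) (r : T + 'I_2 -> nat),
   [/\ forall x y, b x y -> r y < r x,
       forall x y, b x y -> inS S x,
       forall x y, b x y -> (y \in X) || inS S y &
       forall x y, x != y -> ((exists w, b x w && b y w) <-> edgeU S x y)].

Lemma degS_D1 (S : {set T}) (v x : T) : v \in S -> x != v ->
  degS S x = (degS (S :\ v) x + f x v)%N.
Proof.
move=> vS xv; rewrite /degS (cardsD1 v) addnC inE vS /=; congr (_ + _)%N.
by apply: eq_card => y; rewrite !inE andbA.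
Qed.

Lemma PS_D1 (S : {set T}) (v : T) : v \in S -> PS S = (PS (S :\ v) + (degS S v).*2)%N.
Proof.
move=> vS; rewrite /PS (big_setD1 v vS) /=.
rewrite (eq_bigr (fun x => degS (S :\ v) x + f x v)%N); last first.
  by move=> x; rewrite !inE => /andP [xv _]; rewrite (degS_D1 vS xv).
rewrite big_split /=.
have -> : (\sum_(i in S :\ v) f i v = degS S v)%N.
  transitivity (\sum_(i in S :\ v | f i v) 1)%N.
    by rewrite big_mkcondr; apply: eq_bigr => i _; case: (f i v).
  rewrite sum1_card /degS (cardsD1 v) inE vS firr /= add0n.
  apply: eq_card => y. rewrite unfold_in /= !inE fsym. by case: (y == v); case: (y \in S).
by rewrite -addnn /PS; slia.
Qed.


Lemma edgeU_sub (S S' : {set T}) x y : S \subset S' -> edgeU S x y -> edgeU S' x y.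
Proof.
move=> /subsetP sS; case: x => // u; case: y => // u' /=.
by case/and3P => uS u'S fu; rewrite !sS.
Qed.

Lemma goodB n : forall (S : {set T}) (X : {set T + 'I_2}), #|S| = n ->
  (forall u, inl u \in X -> u \notin S) -> 0 < #|X| ->
  4 + PS S <= 2 * (#|X| + #|S|) -> Good S X.
Proof.
elim: n => [|n IH] S X cS disj X0 pot.
  exists (fun _ _ => false), (fun _ => 0); split => // x y xy.
  have S0 : S = set0 by apply/eqP; rewrite -cards_eq0 cS.
  split; first by case.
  case: x xy => [u|i] //; case: y => [u'|i'] //=.
  by rewrite S0 inE.
have [v0 v0S] : exists v0, v0 \in S by apply/set0Pn; rewrite -card_gt0 cS.
case: (arg_minnP (degS S) v0S) => v vS vmin.
have {}vS : v \in S by [].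
have {}vmin : forall j, j \in S -> degS S v <= degS S j by [].

set d := degS S v.
set N := [set y in S | f v y].
have cN : #|N| = d by [].
have NS : N \subset S :\ v.
  apply/subsetP => y; rewrite !inE => /andP [yS fvy]; rewrite yS andbT.
  by apply/eqP => yv; rewrite yv firr in fvy.
have dS : d < #|S|.
  rewrite -cN (cardsD1 v S). by rewrite vS add1n ltnS subset_leq_card.
have PSd : d * #|S| <= PS S.
  rewrite mulnC -sum_nat_const; apply: leq_sum => x xS; exact: vmin.
have dX : d <= #|X|.
  case: (leqP d 1) => [d1|d2]; first by slia.
  tolia; nia.
pose eX := enum X. pose eN := enum N.
pose g y := nth (inr ord0) eX (index y eN).
have gX : forall y, y \in N -> g y \in X.
  move=> y yN.
  have : index y eN < #|X|.
    by apply: leq_trans dX; rewrite -cN cardE index_mem mem_enum.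
  by move=> iy; rewrite /g -mem_enum mem_nth // -cardE.
have ginj : {in N &, injective g}.
  move=> y y' yN y'N; rewrite /g => /eqP.
  rewrite nth_uniq ?enum_uniq // -?cardE; first last.
  - by apply: leq_trans dX; rewrite -cN cardE index_mem mem_enum.
  - by apply: leq_trans dX; rewrite -cN cardE index_mem mem_enum.
  move/eqP/(congr1 (nth y eN)); rewrite !nth_index ?mem_enum //.
pose D := g @: N.
have DX : D \subset X by apply/subsetP => _ /imsetP [y yN ->]; exact: gX.
have cD : #|D| = d by rewrite card_in_imset.
have vX : inl v \notin X by apply/negP => /disj; rewrite vS.
pose X' := inl v |: (X :\: D).
have cX' : #|X'| = (#|X| - d).+1.
  rewrite cardsU1 !inE (negbTE vX) andbF /= add1n cardsD (setIidPr DX) cD.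
  by [].
have cS' : #|S :\ v| = n by move: cS; rewrite (cardsD1 v S) vS add1n; case.
have IHg : Good (S :\ v) X'.
  apply: IH => //.
  - move=> u; rewrite !inE => /orP [/eqP [->]|/andP [_ uX]]; first by rewrite eqxx.
    by rewrite (negbTE (disj u uX)) andbF.
  - by rewrite cX'.
  - move: pot; rewrite (PS_D1 vS) cX' cS' cS -/d -mul2n => pot; slia.
case: IHg => b [r [br bsrc btgt bcomp]].
have inSD : forall x, inS S x -> x \notin D.
  case=> // u /= uS; apply/negP => /(subsetP DX) /disj; by rewrite uS.
have btD : forall x y, b x y -> y \notin D.
  move=> x y /btgt; rewrite !inE => /orP [/orP [/eqP ->|/andP [yD _]] | ].
  - by apply: inSD.
  - by [].
  - by case: y => // u /=; rewrite !inE => /andP [_ uS]; apply: inSD.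
have bsD : forall x y, b x y -> inS S x.
  by move=> x y /bsrc; case: x => // u /=; rewrite !inE => /andP [_ ->].
pose b2 x y := b x y || ((y \in D) && ((x == inl v) ||
                  (if x is inl u then (u \in N) && (g u == y) else false))).
pose r2 y := if y \in D then 0 else (r y).+1.
have b2S : forall x y, y \in D -> ((x == inl v) ||
                  (if x is inl u then (u \in N) && (g u == y) else false)) -> inS S x.
  move=> x y _ /orP [/eqP -> //|]; case: x => // u /andP [uN _].
  by move: uN; rewrite !inE => /andP [].
exists b2, r2; split.
- move=> x y /orP [bxy|/andP [yD H]].
    rewrite /r2 (negbTE (btD _ _ bxy)) (negbTE (inSD _ (bsD _ _ bxy))) ltnS.
    exact: br.
  by rewrite /r2 yD (negbTE (inSD _ (b2S _ _ yD H))).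
- move=> x y /orP [bxy|/andP [yD H]]; first exact: bsD bxy.
  exact: b2S yD H.
- move=> x y /orP [bxy|/andP [yD H]]; last by rewrite (subsetP DX).
  move: (btgt _ _ bxy); rewrite !inE => /orP [/orP [/eqP ->|/andP [_ ->]]|] //=.
    by rewrite vS orbT.
  by case: y bxy => // u _ /=; rewrite !inE => /andP [_ ->]; rewrite orbT.
move=> x y xy; split.
  case=> w /andP [bx byy].
  case wD: (w \in D); last first.
    move: bx byy; rewrite /b2 wD /= !orbF => bx byy.
    apply: (@edgeU_sub (S :\ v)); first exact: subsetDl.
    by apply/(bcomp _ _ xy); exists w; rewrite bx byy.
  have nbx : b x w = false by apply/negP => /btD; rewrite wD.
  have nby : b y w = false by apply/negP => /btD; rewrite wD.
  move: bx byy; rewrite /b2 nbx nby wD /= => Hx Hy; clear nbx nby.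
  case/orP: Hx => [/eqP Ex|Hx]; case/orP: Hy => [/eqP Ey|Hy].
  - by rewrite Ex Ey eqxx in xy.
  - subst x; case: y xy Hy => // u _ /andP [uN _]; move: uN.
    by rewrite inE /= => /andP [uS fvu]; rewrite /= vS uS fvu.
  - subst y; case: x xy Hx => // u _ /andP [uN _]; move: uN.
    by rewrite inE /= => /andP [uS fvu]; rewrite /= vS uS fsym fvu.
  case: x xy Hx => // u; case: y Hy => // u' /andP [u'N /eqP gu'] xy /andP [uN /eqP gu].
  have uu : u = u' by apply: ginj; rewrite // gu gu'.
  by rewrite uu eqxx in xy.
case: x xy => // a; case: y => // a' xy /= /and3P [aS a'S faa'].
case av: (a == v).
  move/eqP: av => av; subst a.
  have a'N : a' \in N by rewrite inE a'S faa'.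
  exists (g a'); apply/andP; split; apply/orP; right; rewrite imset_f //=.
    by rewrite eqxx.
  by rewrite a'N eqxx orbT.
case a'v: (a' == v).
  move/eqP: a'v => a'v; subst a'.
  have aN : a \in N by rewrite inE aS fsym faa'.
  exists (g a); apply/andP; split; apply/orP; right; rewrite imset_f //=.
    by rewrite aN eqxx orbT.
  by rewrite eqxx.
have : edgeU (S :\ v) (inl a) (inl a') by rewrite /= !inE av a'v aS a'S faa'.
move/(bcomp _ _ xy) => [w /andP [b1 b3]].
by exists w; rewrite /b2 b1 b3.
Qed.

End B.

Lemma rank_path (V : finType) (a : rel V) (r : V -> nat) :
  (forall x y, a x y -> r y < r x) ->
  forall p z, path a z p -> r (last z p) <= r z.
Proof.
move=> ar; elim=> [|y p IH] z //= /andP [azy py].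
by apply: leq_trans (IH _ py) (ltnW (ar _ _ azy)).
Qed.

Lemma rank_acyclic (V : finType) (a : rel V) (r : V -> nat) :
  (forall x y, a x y -> r y < r x) -> acyclic a.
Proof.
move=> ar x y axy; apply/negP => /connectP [p pth lst].
have := rank_path ar pth; rewrite -lst => H.
by have := leq_ltn_trans H (ar _ _ axy); rewrite ltnn.
Qed.

Lemma clique_adj (T : finType) (e : rel T) (K : {set T}) x y :
  is_clique e K -> x \in K -> y \in K -> x != y -> e x y.
Proof.
move=> Kc xK yK xy; move: Kc => /forallP /(_ x); rewrite xK /= => /forallP /(_ y).
by rewrite yK /= => /implyP; apply.
Qed.

Lemma assemble (T : finType) (e : rel T) (K : {set T}) :
  symmetric e -> irreflexive e -> is_clique e K ->
  let e' := [rel x y | e x y && ~~ ((x \in K) && (y \in K))] in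
  4 + PS e' setT <= 2 * (1 + #|T|) ->
  exists a : rel (T + 'I_2),
     [/\ acyclic a,
         competition_graph a =2 @add_isolated T 2 e &
         forall v, v \in K -> a (inl v) (inr ord_max)].
Proof.
move=> esym eirr Kc e' pot.
have e'sym : symmetric e' by move=> x y; rewrite /e' /= esym [(y \in K) && _]andbC.
have e'irr : irreflexive e' by move=> x; rewrite /e' /= eirr.
have : Good e' setT [set inr ord0].
  apply: (@goodB T e' e'sym e'irr #|T|).
  - exact: cardsT.
  - by move=> u; rewrite inE.
  - by rewrite cards1.
  - by rewrite cards1 cardsT.
case=> b [r [br bsrc btgt bcomp]].
have bnm : forall x y, b x y -> y != inr ord_max.
  move=> x y /btgt; rewrite inE; case: y => // i /=; rewrite orbF => /eqP [->].
  by [].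
pose a x y := b x y || ((y == inr ord_max) && (if x is inl u then u \in K else false)).
exists a; split.
- apply: (@rank_acyclic _ a (fun y => if y == inr ord_max then 0 else (r y).+1)).
  move=> x y /orP [bxy|/andP [/eqP -> H]].
    rewrite (negbTE (bnm _ _ bxy)).
    have := bsrc _ _ bxy; case: x bxy => // u bxy _ /=; rewrite ltnS; exact: br.
  by case: x H.
- move=> x y; rewrite /competition_graph.
  have nsrc : forall i w, a (inr i) w = false.
    move=> i w; rewrite /a /= andbF orbF; apply/negP => /bsrc //.
  case: x => [u|i]; last first.
    have -> : [exists w, a (inr i) w && a y w] = false.
      by apply/negbTE/existsPn => w; rewrite nsrc.
    by rewrite andbF; case: y.
  case: y => [u'|i']; last first.
    have -> : [exists w, a (inl u) w && a (inr i') w] = false.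
      by apply/negbTE/existsPn => w; rewrite nsrc andbF.
    by rewrite andbF.
  rewrite /=; apply/idP/idP.
    case/andP => xy /existsP [w /andP [aw1 aw2]].
    have uu' : u != u' by apply: contra xy => /eqP ->.
    case wm: (w == inr ord_max).
      have nb1 : b (inl u) w = false by apply/negP => /bnm; rewrite wm.
      have nb2 : b (inl u') w = false by apply/negP => /bnm; rewrite wm.
      move: aw1 aw2; rewrite /a nb1 nb2 wm /= => uK u'K.
      exact: clique_adj Kc uK u'K uu'.
    move: aw1 aw2; rewrite /a wm /= !orbF => bw1 bw2.
    have : edgeU e' setT (inl u) (inl u') by apply/(bcomp _ _ xy); exists w; rewrite bw1 bw2.
    by rewrite /= !inE /e' /= => /andP [].
  move=> euu'.
  have xy : (inl u : T + 'I_2) != inl u'.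
    by apply/negP => /eqP [uu]; rewrite uu eirr in euu'.
  rewrite xy /=.
  case: (boolP ((u \in K) && (u' \in K))) => [/andP [uK u'K]|nK].
    by apply/existsP; exists (inr ord_max); rewrite /a eqxx uK u'K !orbT.
  have : edgeU e' setT (inl u) (inl u') by rewrite /= !inE /e' /= euu' nK.
  move/(bcomp _ _ xy) => [w /andP [b1 b2]]; apply/existsP; exists w; by rewrite /a b1 b2.
- by move=> v vK; rewrite /a eqxx vK orbT.
Qed.


Lemma orb_eqP (a b c d : nat) : (a = b \/ c = d) -> (a == b) || (c == d).
Proof. by case=> ->; rewrite eqxx ?orbT. Qed.

Lemma modS k n : k < n -> k.+1 %% n = if k.+1 == n then 0 else k.+1.
Proof.
move=> kn; case: eqP => [->|ne]; first by rewrite modnn.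
by rewrite modn_small //; rewrite ltn_neqAle kn andbT; apply/eqP.
Qed.

Lemma cycP m i j : i < m.+2 -> j < m.+2 ->
  ((j == i.+1 %% m.+2) || (i == j.+1 %% m.+2)) <->
  (j = i.+1 \/ i = j.+1 \/ (i = 0 /\ j = m.+1) \/ (j = 0 /\ i = m.+1)).
Proof.
move=> Hi Hj; rewrite (modS Hi) (modS Hj).
case: (i.+1 =P m.+2) => E1; case: (j.+1 =P m.+2) => E2 /=; split => H;
  (try by move/orP: H => [] /eqP H'; slia); apply: orb_eqP; slia.
Qed.

Lemma desc (T : finType) (e : rel T) (C N : {set T}) (d : T -> nat) (v : T) :
  (forall x, x \in C -> d x = 0 -> x \in N) ->
  (forall x, x \in C -> 0 < d x -> exists y, [/\ y \in C, e x y & (d y).+1 = d x]) ->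
  forall n x, x \in C -> d x = n -> 0 < n ->
  exists q : seq T, [/\ 0 < size q,
     forall i, i < (size q).+1 -> nth v (x :: q) i \in C,
     forall i, i < (size q).+1 -> d (nth v (x :: q) i) + i = d x,
     last x q \in N &
     (forall i, 0 < i -> i < size q -> nth v (x :: q) i \notin N)] /\
     forall i, i < size q -> e (nth v (x :: q) i) (nth v (x :: q) i.+1).
Proof.
move=> D1 D2; elim=> [|n IH] x xC dx // _.
case: (D2 x xC) => [|y [yC exy dy]]; first by rewrite dx.
case yN: (y \in N).
  exists [:: y]; split; first split => //.
  - by case=> [|[|]].
  - by case=> [|[|]] //= _; rewrite ?addn0 // addn1 dy.
  - by move=> i i0 /= i1; exfalso; slia.
  - by case.
have dyn : d y = n by move: dy; rewrite dx => -[].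
have ny : 0 < n.
  rewrite lt0n; apply/negP => /eqP n0.
  by have := D1 y yC; rewrite dyn n0 yN => /(_ erefl).
case: (IH y yC dyn ny) => q [[q0 qC qd ql qi] qe].
exists (y :: q); split; first split => //.
- by case=> [|i] //=; rewrite ltnS => /qC.
- case=> [|i] /=; first by rewrite addn0.
  by rewrite ltnS => /qd; rewrite addnS dx -dyn => ->.
- case=> [|[|i]] //= _; first by rewrite yN.
  by rewrite !ltnS => H; apply: (qi i.+1).
- by case=> [|i] //=; rewrite ltnS => /qe.
Qed.

Lemma hole_build (T : finType) (e : rel T) (C N : {set T}) (d : T -> nat) (v b : T) :
  symmetric e -> irreflexive e ->
  v \notin C -> N \subset C -> (forall y, y \in C -> e v y = (y \in N)) ->
  (forall y z, y \in N -> z \in N -> ~~ e y z) ->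
  (forall x, x \in C -> d x = 0 -> x \in N) ->
  (forall x, x \in C -> 0 < d x -> exists y, [/\ y \in C, e x y & (d y).+1 = d x]) ->
  (forall x y, x \in C -> y \in C -> e x y -> d x <= (d y).+1) ->
  b \in N -> 0 < d b ->
  exists H : {set T}, [/\ is_hole e H, H \subset v |: C, v \in H, b \in H &
     forall y, y \in N -> y \in H -> y != b -> d y < d b].
Proof.
move=> esym eirr vC NC eN Nind D1 D2 D3 bN db.
have bC : b \in C := subsetP NC b bN.
have [q [[q0 qC qd ql qi] qe]] := desc v D1 D2 bC erefl db.
set m := size q in q0 qC qd qe qi.
have Pm : nth v (b :: q) m = last b q := nth_last v (b :: q).
have m2 : 1 < m.
  rewrite ltnNge; apply/negP => m1.
  have m1' : m = 1 by slia.
  have := qe 0 q0; rewrite -/(nth v (b :: q) 1) -m1' Pm => ebc.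
  by have := Nind b _ bN ql; rewrite ebc.
have PN : forall i, i < m.+1 -> (nth v (b :: q) i \in N) = (i == 0) || (i == m).
  move=> i im; case: (posnP i) => [->|i0]; first by rewrite /= bN.
  case: (eqVneq i m) => [->|im']; first by rewrite Pm ql orbT.
  rewrite (negbTE (qi i i0 _)); last by rewrite ltn_neqAle im' -ltnS.
  by [].
have Pinj : forall i j, i < m.+1 -> j < m.+1 -> nth v (b :: q) i = nth v (b :: q) j -> i = j.
  move=> i j Hi Hj E; have := qd i Hi; have := qd j Hj; rewrite E => H1 H2; slia.
have PE : forall i j, i < m.+1 -> j < m.+1 ->
    e (nth v (b :: q) i) (nth v (b :: q) j) <-> (j = i.+1 \/ i = j.+1).
  move=> i j Hi Hj; split.
    move=> eij.
    have H1 := D3 _ _ (qC i Hi) (qC j Hj) eij.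
    have eji : e (nth v (b :: q) j) (nth v (b :: q) i) by rewrite esym.
    have H2 := D3 _ _ (qC j Hj) (qC i Hi) eji.
    have H3 := qd i Hi; have H4 := qd j Hj.
    have H5 : i != j by apply/eqP => ij; move: eij; rewrite ij eirr.
    slia.
  case=> E; [subst j | subst i]; first by apply: qe; rewrite -ltnS.
  by rewrite esym; apply: qe; rewrite -ltnS.
set s := v :: b :: q.
have sE : forall i j, i < m.+2 -> j < m.+2 ->
   e (nth v s i) (nth v s j) <->
   (j = i.+1 \/ i = j.+1 \/ (i = 0 /\ j = m.+1) \/ (j = 0 /\ i = m.+1)).
  case=> [|i] [|j] Hi Hj.
  - by rewrite /= eirr; split => // H; exfalso; slia.
  - rewrite [nth v s 0]/= [nth v s j.+1]/= (eN _ (qC j Hj)) (PN j Hj).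
    split; first by move/orP => [] /eqP ->; slia.
    by move=> H; apply: orb_eqP; slia.
  - rewrite [nth v s 0]/= [nth v s i.+1]/= esym (eN _ (qC i Hi)) (PN i Hi).
    split; first by move/orP => [] /eqP ->; slia.
    by move=> H; apply: orb_eqP; slia.
  - rewrite [nth v s i.+1]/= [nth v s j.+1]/=.
    apply: (iff_trans (PE i j Hi Hj)); split => H; slia.
have vP : v \notin b :: q.
  apply/negP => /(nthP v) [i Hi E].
  by have := qC i Hi; rewrite E (negbTE vC).
have us : uniq s.
  rewrite /s cons_uniq vP andTb; apply/(uniqP v) => i j Hi Hj.
  exact: Pinj.
exists [set x in s]; split.
- exists s; split => //.
  + by move=> x; rewrite inE.
  move=> x y xs ys.
  have Hi : index x s < m.+2 by rewrite index_mem.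
  have Hj : index y s < m.+2 by rewrite index_mem.
  have -> : e x y = e (nth v s (index x s)) (nth v s (index y s)) by rewrite !nth_index.
  have -> : size s = m.+2 by [].
  apply/idP/idP => H.
    by apply/(cycP Hi Hj); apply/(sE _ _ Hi Hj).
  by apply/(sE _ _ Hi Hj); apply/(cycP Hi Hj).
- apply/subsetP => x; rewrite inE /s in_cons => /orP [/eqP ->|/(nthP v) [i Hi <-]].
    by rewrite !inE eqxx.
  by rewrite !inE qC ?orbT.
- by rewrite inE /s in_cons eqxx.
- by rewrite inE /s !in_cons eqxx orbT.
move=> y yN; rewrite inE /s in_cons => /orP [/eqP yv|/(nthP v) [i Hi E]] yb.
  by have := subsetP NC y yN; rewrite yv (negbTE vC).
have := PN i Hi; rewrite E yN => Hc; have : (i == 0) || (i == m) by rewrite -Hc.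
case/orP => [/eqP i0|/eqP im].
  by move: yb; rewrite -E i0 eqxx.
have := qd i Hi; rewrite E im => Hd; slia.
Qed.

Section Layers.
Variables (T : finType) (e : rel T).
Hypothesis esym : symmetric e.

Definition eC (C : {set T}) : rel T := [rel x y | [&& x \in C, y \in C & e x y]].
Definition connC (C : {set T}) := forall x y, x \in C -> y \in C -> connect (eC C) x y.

Fixpoint layer (C : {set T}) (a0 : T) n : {set T} :=
  match n with
  | 0 => [set a0]
  | n'.+1 => layer C a0 n' :|: [set y in C | [exists z in layer C a0 n', e z y]]
  end.

Lemma layer_mono (C : {set T}) (a0 : T) m n : m <= n -> layer C a0 m \subset layer C a0 n.
Proof.
elim: n => [|n IH]; first by rewrite leqn0 => /eqP ->.
rewrite leq_eqVlt => /orP [/eqP ->//|]; rewrite ltnS => /IH H.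
by apply: subset_trans H _; rewrite /= subsetUl.
Qed.

Lemma layer_sub (C : {set T}) (a0 : T) n : a0 \in C -> layer C a0 n \subset C.
Proof.
move=> a0C; elim: n => [|n IH] /=; first by rewrite sub1set.
by rewrite subUset IH; apply/subsetP => y; rewrite inE => /andP [].
Qed.

Lemma layer_path (C : {set T}) (a0 : T) : forall p z n, z \in layer C a0 n -> path (eC C) z p ->
  last z p \in layer C a0 (n + size p).
Proof.
elim=> [|y p IH] z n zn /=; first by rewrite addn0.
case/andP => /and3P [zC yC ezy] pth.
rewrite addnS -addSn; apply: IH pth.
by rewrite /= inE; apply/orP; right; rewrite inE yC /=; apply/existsP; exists z; rewrite zn.
Qed.

Lemma dist_exists (C : {set T}) (a0 : T) : a0 \in C -> connC C ->
  exists d : T -> nat,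
    [/\ forall x, x \in C -> d x = 0 -> x = a0,
        forall x, x \in C -> 0 < d x -> exists y, [/\ y \in C, e x y & (d y).+1 = d x] &
        forall x y, x \in C -> y \in C -> e x y -> d x <= (d y).+1].
Proof.
move=> a0C conn.
have exd : forall x, exists n, (x \in layer C a0 n) || (x \notin C).
  move=> x; case xC: (x \in C); last by exists 0; rewrite orbT.
  have /connectP [p pth lst] := conn a0 x a0C xC.
  by exists (0 + size p); rewrite lst (layer_path (n := 0)) // /= set11.
pose d x := ex_minn (exd x).
have dP : forall x, x \in C -> x \in layer C a0 (d x).
  by move=> x xC; rewrite /d; case: ex_minnP => m /orP [//|]; rewrite xC.
have dmin : forall x n, x \in layer C a0 n -> d x <= n.
  by move=> x n xn; rewrite /d; case: ex_minnP => m _ H; apply: H; rewrite xn.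
exists d; split.
- by move=> x xC d0; have := dP x xC; rewrite d0 /= inE => /eqP.
- move=> x xC; case dx: (d x) => [//|m] _.
  have := dP x xC; rewrite dx /= inE => /orP [xm|].
    by have := dmin _ _ xm; rewrite dx ltnn.
  rewrite inE => /andP [_ /existsP [z /andP [zm ezx]]].
  have zC : z \in C := subsetP (layer_sub m a0C) z zm.
  exists z; split => //; first by rewrite esym.
  have dz := dmin _ _ zm.
  have mz : m <= d z.
    rewrite leqNgt; apply/negP => lt.
    have xl : x \in layer C a0 (d z).+1.
      rewrite /= inE; apply/orP; right; rewrite inE xC /=.
      by apply/existsP; exists z; rewrite (dP z zC) ezx.
    have := dmin _ _ (subsetP (layer_mono C a0 lt) x xl); rewrite dx ltnn //.
  by apply/eqP; rewrite eqSS eqn_leq dz mz.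
- move=> x y xC yC exy; apply: dmin.
  rewrite /= inE; apply/orP; right; rewrite inE xC /=.
  by apply/existsP; exists y; rewrite dP // esym exy.
Qed.

Lemma conn_step (C : {set T}) (w x0 : T) : connC C -> x0 \in C -> e w x0 -> connC (w |: C).
Proof.
move=> conn x0C ewx.
have sub : forall a b, connect (eC C) a b -> connect (eC (w |: C)) a b.
  move=> a b; apply: connect_sub => u u' /and3P [uC u'C e1].
  by apply: connect1; rewrite /eC /= !inE uC u'C e1 !orbT.
have wx : connect (eC (w |: C)) w x0 by apply: connect1; rewrite /eC /= !inE eqxx x0C ewx orbT.
have xw : connect (eC (w |: C)) x0 w by apply: connect1; rewrite /eC /= !inE eqxx x0C esym ewx orbT.
move=> x y /setU1P [->|xC] /setU1P [->|yC].
- exact: connect0.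
- by apply: connect_trans wx (sub _ _ (conn _ _ x0C yC)).
- by apply: connect_trans (sub _ _ (conn _ _ xC x0C)) xw.
- exact: sub (conn _ _ xC yC).
Qed.

End Layers.

Section Count.
Variables (T : finType) (e : rel T) (K : {set T}) (Hset : {set {set T}}).
Hypotheses (esym : symmetric e) (eirr : irreflexive e).
Hypothesis triK : forall x y z, e x y -> e y z -> e x z -> x \in K.
Hypothesis Hspec : forall S, S \in Hset <-> is_hole e S.

Definition e' := [rel x y | e x y && ~~ ((x \in K) && (y \in K))].
Lemma e'sym : symmetric e'.
Proof. by move=> x y; rewrite /e' /= esym [(y \in K) && _]andbC. Qed.
Lemma e'irr : irreflexive e'.
Proof. by move=> x; rewrite /e' /= eirr. Qed.

Definition holesIn (C : {set T}) := #|[set H in Hset | H \subset C]|.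
Definition Inv (C : {set T}) := PS e' C + 2 * #|K| <= 2 * #|C| + 2 * holesIn C.

Lemma step (C : {set T}) (v x0 : T) : K \subset C -> connC e C -> Inv C ->
  v \notin C -> x0 \in C -> e v x0 -> Inv (v |: C).
Proof.
move=> KC conn inv vC x0C evx.
have vK : v \notin K by apply: contra vC; apply: (subsetP KC).
set N := [set y in C | e v y].
have x0N : x0 \in N by rewrite inE x0C evx.
have NC : N \subset C by apply/subsetP => y; rewrite inE => /andP [].
have eN : forall y, y \in C -> e v y = (y \in N) by move=> y yC; rewrite inE yC.
have Nind : forall y z, y \in N -> z \in N -> ~~ e y z.
  move=> y z; rewrite !inE => /andP [_ evy] /andP [_ evz]; apply/negP => eyz.
  by have := triK evy eyz evz; rewrite (negbTE vK).
have [dd [D1 D2 D3]] := dist_exists esym x0C conn.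
have D1' : forall x, x \in C -> dd x = 0 -> x \in N by move=> x xC /(D1 _ xC) ->.
pose Q b H := [&& H \in Hset, H \subset v |: C, v \in H, b \in H &
     [forall y in N, ((y \in H) && (y != b)) ==> (dd y < dd b)]].
have hb : forall b, b \in N :\ x0 -> exists H, Q b H.
  move=> b; rewrite !inE => /and3P [bx0 bC evb].
  have bN : b \in N by rewrite inE bC evb.
  have db : 0 < dd b.
    by rewrite lt0n; apply/negP => /eqP /(D1 _ bC) bx; rewrite bx eqxx in bx0.
  have [H [Hh Hsub vH bH Hd]] := hole_build esym eirr vC NC eN Nind D1' D2 D3 bN db.
  exists H; apply/and5P; split => //; first exact/Hspec.
  apply/forallP => y; apply/implyP => yN; apply/implyP => /andP [yH yb].
  exact: Hd.
pose ch b := odflt set0 [pick H | Q b H].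
have chQ : forall b, b \in N :\ x0 -> Q b (ch b).
  move=> b /hb [H QH]; rewrite /ch; case: pickP => [H' -> //|/(_ H)].
  by rewrite QH.
have chinj : {in N :\ x0 &, injective ch}.
  move=> b b' bN b'N E.
  have := chQ b bN; have := chQ b' b'N; rewrite -E.
  move=> /and5P [_ _ _ b'H Hd'] /and5P [_ _ _ bH Hd].
  case: (eqVneq b b') => // bb'.
  have bN0 : b \in N by move: bN; rewrite inE => /andP [].
  have b'N0 : b' \in N by move: b'N; rewrite inE => /andP [].
  have := (forallP Hd) b'; rewrite b'N0 b'H eq_sym bb' /= => lt1.
  have := (forallP Hd') b; rewrite bN0 bH bb' /= => lt2.
  by have := ltn_trans lt1 lt2; rewrite ltnn.
set New := ch @: (N :\ x0).
have cNew : #|New| = #|N| - 1.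
  by rewrite card_in_imset // (cardsD1 x0 N) x0N add1n subn1.
set Old := [set H in Hset | H \subset C].
set All := [set H in Hset | H \subset v |: C].
have sub1 : Old \subset All.
  apply/subsetP => H; rewrite !inE => /andP [-> HC] /=.
  by apply: subset_trans HC _; apply: subsetUr.
have sub2 : New \subset All.
  apply/subsetP => _ /imsetP [b bN ->]; rewrite inE.
  by case/and5P: (chQ b bN) => -> -> _ _ _.
have dis : Old :&: New = set0.
  apply/setP => H; rewrite !inE; apply/negP => /andP [/andP [_ HC] /imsetP [b bN EH]].
  case/and5P: (chQ b bN) => _ _ vH _ _.
  by move: HC; rewrite EH => /subsetP /(_ v vH); rewrite (negbTE vC).
have cAll : #|Old| + #|New| <= #|All|.
  have := cardsU Old New; rewrite dis cards0 subn0 => <-.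
  by apply: subset_leq_card; rewrite subUset sub1 sub2.
have PSv : PS e' (v |: C) = PS e' C + (#|N|).*2.
  rewrite (PS_D1 e'sym e'irr (setU11 v C)) setU1K //.
  suff -> : degS e' (v |: C) v = #|N| by [].
  apply: eq_card => y; rewrite !inE /e' /= (negbTE vK) /= andbT.
  case: (eqVneq y v) => [->|yv] /=; first by rewrite eirr andbF.
  by [].
have cN1 : 0 < #|N| by rewrite card_gt0; apply/set0Pn; exists x0.
rewrite /Inv PSv cardsU1 vC add1n /holesIn -/All.
move: inv; rewrite /Inv /holesIn -/Old -mul2n => inv; slia.
Qed.

Lemma grow : connected_graph e -> 0 < #|K| -> is_clique e K ->
  forall k, exists C : {set T}, [/\ K \subset C, connC e C, Inv C & minn (#|K| + k) #|T| <= #|C|].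
Proof.
move=> gconn K0 Kc; elim=> [|k [C [KC conn inv cC]]].
  exists K; split => //.
  - move=> x y xK yK; case: (eqVneq x y) => [->|xy]; first exact: connect0.
    by apply: connect1; rewrite /eC /= xK yK (clique_adj Kc xK yK xy).
  - rewrite /Inv.
    have -> : PS e' K = 0.
      rewrite /PS big1 // => x xK; apply/eqP; rewrite cards_eq0; apply/eqP/setP => y.
      by rewrite !inE /e' /= xK; case: (y \in K); rewrite ?andbF.
    by rewrite add0n; slia.
  - by rewrite addn0 geq_minl.
case: (pickP (fun y => y \notin C)) => [y yC|none]; last first.
  have CT : C = setT by apply/setP => y; rewrite inE; move: (none y); rewrite /= => /negbFE.
  exists C; split => //; by rewrite CT cardsT geq_minr.
have [x xK] : exists x, x \in K by apply/set0Pn; rewrite -card_gt0.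
have xC : x \in C := subsetP KC x xK.
have cross : forall p z, z \in C -> path e z p -> last z p \notin C ->
    exists u w, [/\ u \in C, w \notin C & e w u].
  elim=> [|a p IH] z zC /=; first by rewrite zC.
  case/andP => eza pth lst.
  case aC: (a \in C); first exact: IH aC pth lst.
  by exists z, a; rewrite zC aC esym eza.
have /connectP [p pth lst] := gconn x y.
have lC : last x p \notin C by rewrite -lst.
have [u [w [uC wC ewu]]] := cross p x xC pth lC.
exists (w |: C); split.
- by apply: subset_trans KC _; apply: subsetUr.
- exact (conn_step esym conn uC ewu).
- exact: step KC conn inv wC uC ewu.
- rewrite cardsU1 wC add1n; move: cC; rewrite !geq_min => /orP [H|H]; apply/orP.
    by left; rewrite addnS ltnS.
  by right; apply: leq_trans H _.
Qed.

End Count.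

Lemma tri (T : finType) (e : rel T) (K : {set T}) (h : nat) :
  simple_graph e -> at_most_one_nonedge_maxclique e -> omega e = h.+1 ->
  is_clique e K -> #|K| = omega e ->
  forall x y z, e x y -> e y z -> e x z -> x \in K.
Proof.
move=> [esym eirr] amo om Kc cK x y z exy eyz exz.
have Kmax : forall S, is_clique e S -> #|S| <= omega e.
  by move=> S cS; rewrite /omega; apply: (leq_bigmax_cond (F := fun S : {set T} => #|S|)).
pose Q0 := x |: (y |: [set z]).
have nxy : x != y by apply/eqP => E; rewrite E eirr in exy.
have nyz : y != z by apply/eqP => E; rewrite E eirr in eyz.
have nxz : x != z by apply/eqP => E; rewrite E eirr in exz.
have cQ0 : #|Q0| = 3.
  by rewrite /Q0 !cardsU1 cards1 !inE negb_or nxy nxz nyz.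
have clQ0 : is_clique e Q0.
  apply/forallP => a; apply/implyP; rewrite !inE => Ha.
  apply/forallP => b; apply/implyP; rewrite !inE => Hb; apply/implyP => ab.
  by case/or3P: Ha => /eqP Ea; case/or3P: Hb => /eqP Eb; subst a b;
    rewrite ?eqxx in ab; rewrite // esym.
have K3 : 3 <= #|K| by rewrite cK -cQ0; apply: Kmax.
have Kmc : maximal_clique e K.
  split => // S' cS' KS'; apply/eqP; rewrite eq_sym eqEcard KS' /= cK.
  exact: Kmax.
case: (@arg_maxnP _ Q0 (fun S => is_clique e S && (Q0 \subset S)) (fun S => #|S|)).
  by rewrite clQ0 subxx.
move=> Q /andP [cQ Q0Q] Qmax.
have Qmc : maximal_clique e Q.
  split => // S' cS' QS'; apply/eqP; rewrite eq_sym eqEcard QS' /=.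
  by apply: Qmax; rewrite cS' (subset_trans Q0Q QS').
have Q3 : 3 <= #|Q| by rewrite -cQ0 subset_leq_card.
have QK := amo Q K Qmc Q3 Kmc K3.
by rewrite -QK (subsetP Q0Q) // !inE eqxx.
Qed.

Unset Implicit Arguments.
Set Strict Implicit.

Theorem theorem1 (T : finType) (e : rel T) (h : nat) (K : {set T}) :
  simple_graph e -> connected_graph e ->
  num_holes e h -> holes_edge_disjoint e ->
  at_most_one_nonedge_maxclique e ->
  omega e = h.+1 ->
  is_clique e K -> #|K| = omega e ->
  (exists a : rel (T + 'I_2),
     [/\ acyclic a,
         competition_graph a =2 @add_isolated T 2 e &
         forall v, v \in K -> a (inl v) (inr ord_max)])
  /\ competition_number_le e 2.
Proof.
move=> sg gconn [Hset [Hspec cH]] _ amo om Kc cK.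
have [esym eirr] := sg.
have triK := tri sg amo om Kc cK.
have K0 : 0 < #|K| by rewrite cK om.
have [C [KC conn inv cC]] := grow esym eirr triK Hspec gconn K0 Kc #|T|.
have CT : C = setT.
  apply/eqP; rewrite eqEcard subsetT cardsT /=.
  by move: cC; rewrite (minn_idPr _) // leq_addl.
have hs : holesIn Hset setT <= h.
  by rewrite -cH; apply: subset_leq_card; apply/subsetP => H; rewrite inE => /andP [].
have pot : 4 + PS (e' e K) setT <= 2 * (1 + #|T|).
  move: inv; rewrite /Inv CT cardsT cK om => inv; slia.
have [a [ac comp Ki]] := assemble esym eirr Kc pot.
split; first by exists a.
by exists 2; split => //; exists a.
Qed.
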